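(* Let $A\in\mathbb{Z}^{d\times n}$, $\mathbf{b}\in\mathbb{Z}^d$, $\mathbf{c}\in\mathbb{Z}^n$, $\mathbf{u}\in\mathbb{Z}_{\ge0}^n$, and consider the LP $\min\{\mathbf{c}^\top\mathbf{x} : A\mathbf{x}=\mathbf{b},\ \mathbf{0}\le\mathbf{x}\le\mathbf{u},\ \mathbf{x}\in\mathbb{R}^n\}$. Then: (i) for every feasible $\mathbf{x}$ and every $\mathbf{z}\in\mathbb{R}^n\setminus\{\mathbf{0}\}$ with $A\mathbf{z}=\mathbf{0}$ and $\mathbf{x}+\epsilon\mathbf{z}$ feasible for some $\epsilon>0$, there exists $\mathbf{g}\in\mathcal{C}(A)$ with $\mathbf{x}+\epsilon'\mathbf{g}$ feasible for some $\epsilon'>0$ and $-\mathbf{c}^\top\mathbf{g}/\|\mathbf{g}\|_1\ge-\mathbf{c}^\top\mathbf{z}/\|\mathbf{z}\|_1$; hence a discrete steepest-descent direction is a steepest-descent direction among all applicable real directions; (ii) from any feasible solution $\mathbf{x}_0$, every sequence of discrete steepest-descent augmentations reaches an optimal solution after at most $|\mathcal{C}(A)|$ augmentations.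
   Context: Feasible solutions are the $\mathbf{x}\in\mathbb{R}^n$ with $A\mathbf{x}=\mathbf{b}$, $\mathbf{0}\le\mathbf{x}\le\mathbf{u}$. The circuits $\mathcal{C}(A)$: for each nonzero $\mathbf{z}\in\ker(A)$ whose support is inclusion-minimal among supports of nonzero vectors of $\ker(A)$, the line $\mathbb{R}\mathbf{z}$ contains exactly two nonzero integer points closest to the origin; $\mathcal{C}(A)$ is the finite set of all these vectors. Discrete steepest-descent augmentation (LP): given a feasible $\mathbf{x}_k$, choose $\mathbf{z}\in\mathcal{C}(A)$ maximizing $-\mathbf{c}^\top\mathbf{z}/\|\mathbf{z}\|_1$ among all $\mathbf{z}\in\mathcal{C}(A)$ such that $\mathbf{x}_k+\epsilon\mathbf{z}$ is feasible for some $\epsilon>0$; if this maximum is positive, let $\alpha$ be the largest real number with $\mathbf{x}_k+\alpha\mathbf{z}$ feasible and set $\mathbf{x}_{k+1}:=\mathbf{x}_k+\alpha\mathbf{z}$, otherwise stop. *)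

(* Defs.v *)
(* The LP is stated over an arbitrary real field R
   (in particular over the reals); all notions are algebraic. *)
From HB Require Import structures.
From mathcomp Require Import all_boot all_order all_algebra.
Set Implicit Arguments. Unset Strict Implicit. Unset Printing Implicit Defensive.
Import Order.TTheory GRing.Theory Num.Theory.
Local Open Scope ring_scope.

Section LP.
Variables (R : realFieldType) (d n : nat).
Variables (A : 'M[int]_(d, n)) (b : 'cV[int]_d) (c u : 'cV[int]_n).

Definition intmx (p q : nat) (M : 'M[int]_(p, q)) : 'M[R]_(p, q) :=
  map_mx (fun a : int => a%:~R) M.

Definition AR := intmx A.
Definition bR := intmx b.
Definition cR := intmx c.
Definition uR := intmx u.

Definition cost (x : 'cV[R]_n) : R := \sum_(i < n) cR i 0 * x i 0.

Definition norm1 (z : 'cV[R]_n) : R := \sum_(i < n) `|z i 0|.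

Definition feasible (x : 'cV[R]_n) : Prop :=
  AR *m x = bR /\ forall i : 'I_n, 0 <= x i 0 <= uR i 0.

Definition optimal (x : 'cV[R]_n) : Prop :=
  feasible x /\ forall y, feasible y -> cost x <= cost y.

Definition applicable (x z : 'cV[R]_n) : Prop :=
  exists eps : R, 0 < eps /\ feasible (x + eps *: z).

Definition descent (z : 'cV[R]_n) : R := - cost z / norm1 z.

Definition supp_sub (w z : 'cV[R]_n) : Prop :=
  forall i : 'I_n, w i 0 != 0 -> z i 0 != 0.

Definition min_support_kernel (z : 'cV[R]_n) : Prop :=
  z != 0 /\ AR *m z = 0 /\
  forall w : 'cV[R]_n, w != 0 -> AR *m w = 0 -> supp_sub w z -> supp_sub z w.

Definition on_line (w : 'cV[int]_n) (z : 'cV[R]_n) : Prop :=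
  exists lam : R, intmx w = lam *: z.

(* C(A): the nonzero integer points closest to the origin on the lines
   spanned by support-minimal nonzero kernel vectors *)
Definition circuit (g : 'cV[int]_n) : Prop :=
  exists z : 'cV[R]_n, min_support_kernel z /\
    g != 0 /\ on_line g z /\
    forall w : 'cV[int]_n, w != 0 -> on_line w z -> norm1 (intmx g) <= norm1 (intmx w).

Definition dsd_stopped (x : 'cV[R]_n) : Prop :=
  forall g, circuit g -> applicable x (intmx g) -> descent (intmx g) <= 0.

Definition dsd_step (x x' : 'cV[R]_n) : Prop :=
  exists g : 'cV[int]_n, exists alpha : R,
    circuit g /\ applicable x (intmx g) /\
    (forall h, circuit h -> applicable x (intmx h) ->
       descent (intmx h) <= descent (intmx g)) /\
    0 < descent (intmx g) /\
    feasible (x + alpha *: intmx g) /\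
    (forall beta : R, feasible (x + beta *: intmx g) -> beta <= alpha) /\
    x' = x + alpha *: intmx g.

End LP.

(* Main.v *)
Require Import Defs.
From HB Require Import structures.
From mathcomp Require Import all_boot all_order all_algebra.
From mathcomp Require Import ring lra.
From Stdlib Require Import Classical ClassicalEpsilon.
Set Implicit Arguments. Unset Strict Implicit. Unset Printing Implicit Defensive.
Import Order.TTheory GRing.Theory Num.Theory.
Local Open Scope ring_scope.

Section Basics.
Variables (R : realFieldType) (d n : nat) (A : 'M[int]_(d, n)) (b : 'cV[int]_d) (c u : 'cV[int]_n).

Local Notation AR := (AR R A).
Local Notation iR := (intmx R).

Lemma costD (x y : 'cV[R]_n) : cost c (x + y) = cost c x + cost c y.
Proof. by rewrite /cost -big_split; apply: eq_bigr => i _; rewrite !mxE mulrDr. Qed.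

Lemma costZ a (x : 'cV[R]_n) : cost c (a *: x) = a * cost c x.
Proof. by rewrite /cost mulr_sumr; apply: eq_bigr => i _; rewrite !mxE mulrCA. Qed.

Lemma costN (x : 'cV[R]_n) : cost c (- x) = - cost c x.
Proof. by rewrite -scaleN1r costZ mulN1r. Qed.

Lemma costB (x y : 'cV[R]_n) : cost c (x - y) = cost c x - cost c y.
Proof. by rewrite costD costN. Qed.

Lemma cost0 : cost c (0 : 'cV[R]_n) = 0.
Proof. by rewrite -(scale0r (0 : 'cV[R]_n)) costZ mul0r. Qed.

Lemma norm1_ge0 (x : 'cV[R]_n) : 0 <= norm1 x.
Proof. by rewrite /norm1; apply: sumr_ge0 => i _. Qed.

Lemma norm1Z a (x : 'cV[R]_n) : norm1 (a *: x) = `|a| * norm1 x.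
Proof. by rewrite /norm1 mulr_sumr; apply: eq_bigr => i _; rewrite mxE normrM. Qed.

Lemma norm1N (x : 'cV[R]_n) : norm1 (- x) = norm1 x.
Proof. by rewrite -scaleN1r norm1Z normrN normr1 mul1r. Qed.

Lemma norm1D (x y : 'cV[R]_n) : norm1 (x + y) <= norm1 x + norm1 y.
Proof.
by rewrite /norm1 -big_split; apply: ler_sum => i _; rewrite mxE ler_normD.
Qed.

Lemma nz_coord (z : 'cV[R]_n) : z != 0 -> exists i, z i 0 != 0.
Proof.
move=> nz; apply: NNPP => H; move/negP: nz; apply; apply/eqP/matrixP => i j.
rewrite ord1 mxE; apply/eqP; apply: NNPP => Hi; apply: H.
by exists i; apply/negP.
Qed.

Lemma norm1_gt0 (z : 'cV[R]_n) : z != 0 -> 0 < norm1 z.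
Proof.
move=> /nz_coord [i Hi]; rewrite /norm1 (bigD1 i) //=.
apply: (@lt_le_trans _ _ (`|z i 0|)); first by rewrite normr_gt0.
by rewrite lerDl sumr_ge0.
Qed.

Lemma descentZ a (z : 'cV[R]_n) : 0 < a -> descent c (a *: z) = descent c z.
Proof.
move=> a0; rewrite /descent costZ norm1Z gtr0_norm //.
have [->|nz] := eqVneq (norm1 z) 0; first by rewrite mulr0 !invr0 !mulr0.
by field; apply/andP; split => //; rewrite gt_eqF.
Qed.

Lemma descentE (z : 'cV[R]_n) : z != 0 -> - cost c z = descent c z * norm1 z.
Proof.
move=> nz; have := norm1_gt0 nz => h; rewrite /descent -mulrA mulVf ?mulr1 //.
by rewrite gt_eqF.
Qed.

Lemma descent_le (z : 'cV[R]_n) D : z != 0 -> (descent c z <= D) = (- cost c z <= D * norm1 z).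
Proof.
move=> nz; have h := norm1_gt0 nz; rewrite /descent ler_pdivrMr //.
Qed.

Lemma descent_lt (z : 'cV[R]_n) D : z != 0 -> (D < descent c z) = (D * norm1 z < - cost c z).
Proof.
move=> nz; have h := norm1_gt0 nz; rewrite /descent ltr_pdivlMr //.
Qed.

End Basics.

Section Conf.
Variables (R : realFieldType) (d n : nat) (A : 'M[int]_(d, n)) (b : 'cV[int]_d) (c u : 'cV[int]_n).

Local Notation AR := (AR R A).
Local Notation iR := (intmx R).

Lemma btw (x a bb U : R) : 0 <= x <= U -> 0 <= x + bb <= U -> 0 <= a * bb ->
  `|a| <= `|bb| -> 0 <= x + a <= U.
Proof.
move=> /andP[h1 h2] /andP[h3 h4] hab.
case: (lerP 0 a) => ha; case: (lerP 0 bb) => hb;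
  rewrite ?(ger0_norm ha) ?(ger0_norm hb) ?(ltr0_norm ha) ?(ltr0_norm hb) => hn;
  apply/andP; split; nra.
Qed.

Definition conf (w z : 'cV[R]_n) :=
  forall i, 0 <= w i 0 * z i 0 /\ (z i 0 = 0 -> w i 0 = 0).

Lemma feasD (x w : 'cV[R]_n) : feasible A b u x -> AR *m w = 0 ->
  (forall i, 0 <= x i 0 + w i 0 <= uR R u i 0) -> feasible A b u (x + w).
Proof.
move=> [hA _] hw hb; split; first by rewrite mulmxDr hA hw addr0.
by move=> i; rewrite mxE.
Qed.

Lemma feas_box (x : 'cV[R]_n) i : feasible A b u x -> 0 <= x i 0 <= uR R u i 0.
Proof. by case=> _ /(_ i). Qed.

Lemma conf_appl (x z w : 'cV[R]_n) : feasible A b u x -> applicable A b u x z ->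
  AR *m w = 0 -> conf w z -> applicable A b u x w.
Proof.
move=> fx [eps [eps0 fz]] hw cf.
pose M := \sum_i `|w i 0| / `|z i 0| + 1.
have M0 : 0 < M by rewrite /M ltr_wpDl // sumr_ge0 // => i _; rewrite divr_ge0.
have hM : forall i, `|w i 0| <= M * `|z i 0|.
  move=> i; have [hz|hz] := eqVneq (z i 0) 0.
    by rewrite (proj2 (cf i) hz) hz normr0 mulr0.
  have hz' : 0 < `|z i 0| by rewrite normr_gt0.
  rewrite -ler_pdivrMr //; apply: (@le_trans _ _ (\sum_i `|w i 0| / `|z i 0|)).
    by rewrite (bigD1 i) //= lerDl sumr_ge0 // => j _; rewrite divr_ge0.
  by rewrite /M lerDl.
exists (eps / M); split; first by rewrite divr_gt0.
apply: feasD => //; first by rewrite -scalemxAr hw scaler0.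
move=> i.
have := feas_box i fz; rewrite !mxE => hz.
have := feas_box i fx; rewrite !mxE => hx.
apply: (btw hx hz).
  rewrite mulrACA; apply: mulr_ge0; last by case: (cf i).
  by rewrite !mulr_ge0 ?invr_ge0 // ltW.
rewrite !normrM normfV (gtr0_norm eps0) (gtr0_norm M0).
by rewrite -mulrA ler_pM2l // ler_pdivrMl.
Qed.

End Conf.

Lemma sq_pos (R : realFieldType) (z : R) : z != 0 -> 0 < z * z.
Proof. by move=> hz; rewrite lt0r mulf_neq0 //= -expr2 sqr_ge0. Qed.

Lemma div_pos (R : realFieldType) (a bb : R) : 0 < a * bb -> 0 < a / bb.
Proof.
move=> h; have hb : bb != 0 by apply: contraTneq h => ->; rewrite mulr0 ltxx.
rewrite (_ : a / bb = (a * bb) / (bb * bb)); first by rewrite divr_gt0 // sq_pos.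
by field.
Qed.

Lemma argmin_ex (R : realFieldType) (I : finType) (P : pred I) (F : I -> R) :
  (exists i, P i) -> exists i, P i /\ forall j, P j -> F i <= F j.
Proof.
case=> i0 Pi0; case: (arg_minP F Pi0) => i Pi H; exists i; split => //.
Qed.

Lemma abs_add_conf (R : realFieldType) (p q a bb : R) : 0 <= a -> 0 <= bb -> 0 <= p * q ->
  `|a * p + bb * q| = a * `|p| + bb * `|q|.
Proof.
move=> ha hb hpq.
case: (lerP 0 p) => hp; case: (lerP 0 q) => hq.
- by rewrite (ger0_norm hp) (ger0_norm hq) ger0_norm //; nra.
- have -> : p = 0 by nra.
  by rewrite normr0 mulr0 !add0r (ltr0_norm hq) ler0_norm; nra.
- have -> : q = 0 by nra.
  by rewrite normr0 mulr0 !addr0 (ltr0_norm hp) ler0_norm; nra.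
- by rewrite (ltr0_norm hp) (ltr0_norm hq) ler0_norm; nra.
Qed.

Section Elim.
Variables (R : realFieldType) (d n : nat) (A : 'M[int]_(d, n)) (b : 'cV[int]_d) (c u : 'cV[int]_n).

Local Notation AR := (AR R A).

Definition supp (z : 'cV[R]_n) : {set 'I_n} := [set i | z i 0 != 0].

Lemma conf_proper (p z : 'cV[R]_n) : conf p z -> (exists j, z j 0 != 0 /\ p j 0 = 0) ->
  (#|supp p| < #|supp z|)%N.
Proof.
move=> cf [j [hj hpj]]; apply: proper_card; apply/properP; split.
  apply/subsetP => i; rewrite !inE; apply: contra => /eqP hz; apply/eqP.
  exact: (proj2 (cf i) hz).
by exists j; rewrite !inE // hpj eqxx.
Qed.

Lemma elim_step (z v : 'cV[R]_n) : (forall i, v i 0 != 0 -> z i 0 != 0) ->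
  (exists i, 0 < v i 0 * z i 0) ->
  exists t, 0 < t /\ conf (z - t *: v) z /\
    exists i0, z i0 0 != 0 /\ (z - t *: v) i0 0 = 0.
Proof.
move=> sv ex.
have [i0 [P0 Hmin]] := argmin_ex (fun i => z i 0 / v i 0) ex.
have hv0 : v i0 0 != 0 by apply: contraTneq P0 => ->; rewrite mul0r ltxx.
have hz0 : z i0 0 != 0 by apply: contraTneq P0 => ->; rewrite mulr0 ltxx.
set t := z i0 0 / v i0 0.
have t0 : 0 < t by apply: div_pos; rewrite mulrC.
exists t; split => //; split; last first.
  by exists i0; split => //; rewrite !mxE /t divfK // subrr.
move=> i; rewrite !mxE; split; last first.
  move=> hz; have hv : v i 0 = 0.
    by apply/eqP; apply: contraTT (eqxx (z i 0)) => /sv; rewrite hz eqxx.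
  by rewrite hz hv mulr0 subrr.
have key : t * (v i 0 * z i 0) <= z i 0 * z i 0.
  case: (ltrP 0 (v i 0 * z i 0)) => hP.
    have hvi : v i 0 != 0 by apply: contraTneq hP => ->; rewrite mul0r ltxx.
    apply: (@le_trans _ _ (z i 0 / v i 0 * (v i 0 * z i 0))).
      by rewrite ler_pM2r //; apply: Hmin.
    by rewrite mulrA divfK.
  nra.
nra.
Qed.

Lemma combine (z p q : 'cV[R]_n) a bb D : 0 < a -> 0 < bb -> z = a *: p + bb *: q ->
  conf p z -> conf q z -> p != 0 -> q != 0 ->
  descent c p <= D -> descent c q <= D -> descent c z <= D.
Proof.
move=> a0 b0 ez cp cq np nq hp hq.
have nz : z != 0.
  have [i hi] := nz_coord np; apply/eqP => z0; move: hi.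
  by rewrite (proj2 (cp i)) ?eqxx // z0 mxE.
have hn : norm1 z = a * norm1 p + bb * norm1 q.
  rewrite /norm1 !mulr_sumr -big_split /=; apply: eq_bigr => i _.
  rewrite ez !mxE; apply: abs_add_conf; [exact: ltW|exact: ltW|].
  have [hz|hz] := eqVneq (z i 0) 0; first by rewrite (proj2 (cp i) hz) mul0r.
  have := sq_pos hz; have := proj1 (cp i); have := proj1 (cq i); nra.
have hc : cost c z = a * cost c p + bb * cost c q by rewrite ez costD !costZ.
move: hp hq; rewrite !descent_le // hn hc => hp hq.
have := ler_pM2l a0; have := ler_pM2l b0; nra.
Qed.

End Elim.

Section Rat.
Variables (R : realFieldType) (d n : nat) (A : 'M[int]_(d, n)).

Local Notation AR := (AR R A).

Lemma nz_entry (F : nzRingType) p q (K : 'M[F]_(p, q)) : K != 0 -> exists i j, K i j != 0.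
Proof.
move=> nz; apply: NNPP => H; move/negP: nz; apply; apply/eqP/matrixP => i j.
rewrite mxE; apply/eqP; apply: NNPP => Hi; apply: H.
by exists i, j; apply/negP.
Qed.

Lemma msk_prop (z v : 'cV[R]_n) : min_support_kernel A z -> AR *m v = 0 ->
  supp_sub v z -> exists mu, v = mu *: z.
Proof.
case=> nz [Az Hmin] Av svz; have [i0 hi0] := nz_coord nz.
exists (v i0 0 / z i0 0); apply/eqP; rewrite -subr_eq0; apply/negPn/negP => hy.
have := Hmin _ hy; rewrite mulmxBr -scalemxAr Av Az scaler0 subrr => /(_ erefl).
have ssub : supp_sub (v - v i0 0 / z i0 0 *: z) z.
  move=> i; rewrite !mxE; apply: contra => /eqP hz.
  have hv : v i 0 = 0 by apply/eqP; apply: contraTT (eqxx (z i 0)) => /svz; rewrite hz eqxx.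
  by rewrite hv hz mulr0 subrr.
move=> /(_ ssub i0 hi0); rewrite !mxE divfK // subrr.
by rewrite eqxx.
Qed.

Lemma int_on_line (z : 'cV[R]_n) : min_support_kernel A z ->
  exists w : 'cV[int]_n, w != 0 /\ on_line w z.
Proof.
move=> msk; have [nz [Az _]] := msk.
pose dv : 'rV[rat]_n := \row_i (if z i 0 == 0 then 1 else 0).
pose M : 'M[rat]_(d + n, n) := col_mx (map_mx (fun a : int => a%:~R) A) (diag_mx dv).
have MRE : map_mx ratr M = col_mx AR (diag_mx (map_mx ratr dv)) :> 'M[R]_(d + n, n).
  rewrite /M map_col_mx map_diag_mx; congr col_mx.
  by apply/matrixP => i j; rewrite !mxE ratr_int.
have kerE : forall v : 'cV[R]_n, map_mx ratr M *m v = 0 ->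
    AR *m v = 0 /\ supp_sub v z.
  move=> v; rewrite MRE mul_col_mx => /eqP; rewrite col_mx_eq0 => /andP[/eqP h1 /eqP h2].
  split => // i; apply: contra => /eqP hz; apply/eqP.
  move/matrixP: h2 => /(_ i 0); rewrite mul_diag_mx !mxE hz eqxx rmorph1 mul1r.
  by [].
have Mz : map_mx ratr M *m z = 0.
  rewrite MRE mul_col_mx Az; apply/eqP; rewrite col_mx_eq0 eqxx /=.
  apply/eqP/matrixP => i j; rewrite mul_diag_mx !mxE ord1.
  by case: eqP => [->|_]; rewrite ?mulr0 // rmorph0 mul0r.
have nfree : ~~ row_free (M^T).
  apply/negP => fr.
  have frR : row_free (F:=R) ((map_mx ratr M)^T).
    by rewrite /row_free map_trmx mxrank_map.
  move/negP: nz; apply; apply/eqP.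
  apply: trmx_inj; apply: (row_free_inj frR) => /=.
  by rewrite trmx0 mul0mx -trmx_mul Mz trmx0.
move: nfree; rewrite -kermx_eq0 => /nz_entry [i [j hij]].
pose r := row i (kermx (M^T)).
have hr : r *m M^T = 0 by rewrite /r -row_mul mulmx_ker row0.
pose v := (map_mx ratr r)^T : 'cV[R]_n.
have hv : map_mx ratr M *m v = 0.
  rewrite /v -[map_mx ratr M]trmxK -trmx_mul map_trmx -map_mxM hr.
  by apply/matrixP => a bb; rewrite !mxE rmorph0.
have [Av svz] := kerE _ hv.
have vnz : v != 0.
  apply/negP => /eqP/matrixP/(_ j 0); rewrite 3!mxE => /eqP.
  by rewrite [X in _ == X]mxE fmorph_eq0 (negPf hij).
have [mu emu] := msk_prop msk Av svz.
pose D := \prod_k denq (r 0 k).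
have D0 : 0 < D by apply: prodr_gt0 => k _; exact: denq_gt0.
pose w : 'cV[int]_n := \col_jj (numq (r 0 jj) * \prod_(k | k != jj) denq (r 0 k)).
have wE : intmx R w = D%:~R *: v.
  apply/matrixP => a bb; rewrite (ord1 bb) /intmx.
  rewrite [LHS]mxE [RHS]mxE /w /v mxE [X in _ = _ * X]mxE [X in _ = _ * X]mxE intrM.
  
  have hD : D = denq (r 0 a) * \prod_(k | k != a) denq (r 0 k) by rewrite /D (bigD1 a).
  rewrite -[(numq (r 0 a))%:~R]ratr_int numqE rmorphM /= ratr_int hD intrM.
  ring.
exists w; split.
  apply/negP => /eqP w0; move: wE; rewrite w0.
  have -> : intmx R (0 : 'cV[int]_n) = 0 by apply/matrixP => a bb; rewrite !mxE.
  move/esym/eqP; rewrite scaler_eq0 (negPf vnz) orbF intr_eq0.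
  by rewrite gt_eqF.
by exists (D%:~R * mu); rewrite wE emu scalerA.
Qed.

End Rat.

Lemma min_nat (T : Type) (P : T -> Prop) (m : T -> nat) :
  (exists x, P x) -> exists x, P x /\ forall y, P y -> (m x <= m y)%N.
Proof.
case=> x0 P0.
suff H : forall k x, (m x <= k)%N -> P x -> exists x, P x /\ forall y, P y -> (m x <= m y)%N.
  exact: (H _ x0 (leqnn _) P0).
elim=> [|k IH] x hx Px.
  by exists x; split => // y _; apply: leq_trans hx _.
case: (classic (forall y, P y -> (m x <= m y)%N)) => [H|H]; first by exists x.
have [y Hy] := not_all_ex_not _ _ H.
have [Py nle] := imply_to_and _ _ Hy.
apply: (IH y) => //.
rewrite -ltnS; apply: leq_trans hx; rewrite ltnNge; exact/negP.
Qed.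

Section Circ.
Variables (R : realFieldType) (d n : nat) (A : 'M[int]_(d, n)).

Local Notation AR := (AR R A).
Local Notation iR := (intmx R).

Definition mnorm (w : 'cV[int]_n) : nat := (\sum_i `|w i 0%R|%N)%N.

Lemma norm1_int (w : 'cV[int]_n) : norm1 (iR w) = (mnorm w)%:R.
Proof.
rewrite /norm1 /mnorm natr_sum; apply: eq_bigr => i _.
by rewrite mxE natr_absz intr_norm.
Qed.

Lemma intmxN (w : 'cV[int]_n) : iR (- w) = - iR w.
Proof. by apply/matrixP => i j; rewrite !mxE intrN. Qed.

Lemma intmx_nz (w : 'cV[int]_n) : w != 0 -> iR w != 0.
Proof.
move=> nz; apply/negP => /eqP/matrixP H; move/negP: nz; apply; apply/eqP/matrixP => i j.
by move: (H i j); rewrite !mxE => /eqP; rewrite intr_eq0 => /eqP.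
Qed.

Lemma intmx_inj (w w' : 'cV[int]_n) : iR w = iR w' -> w = w'.
Proof.
move/matrixP => H; apply/matrixP => i j.
by move: (H i j); rewrite !mxE => /eqP; rewrite eqr_int => /eqP.
Qed.

Lemma circ_of_msk (z : 'cV[R]_n) : min_support_kernel A z ->
  exists g lam, circuit R A g /\ 0 < lam /\ iR g = lam *: z.
Proof.
move=> msk.
have [w0 H0] := int_on_line msk.
have [g [[ng [lam eg]] gmin]] := @min_nat _ (fun w => w != 0 /\ on_line w z) mnorm (ex_intro _ w0 H0).
have lam0 : lam != 0.
  apply/negP => /eqP l0; move: (intmx_nz ng); rewrite eg l0 scale0r.
  by rewrite eqxx.
have cg : circuit R A g.
  exists z; split => //; split => //; split; first by exists lam.
  move=> w nw ow; rewrite !norm1_int ler_nat; exact: gmin.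
case: (ltrP 0 lam) => hl; first by exists g, lam.
have hl' : 0 < - lam by rewrite oppr_gt0 lt_neqAle lam0.
exists (- g), (- lam); split => //.
  exists z; split => //; split; first by rewrite oppr_eq0.
  split; first by exists (- lam); rewrite intmxN eg scaleNr.
  move=> w nw ow; rewrite !norm1_int ler_nat /mnorm.
  under eq_bigr => i _ do rewrite mxE abszN.
  exact: (gmin w (conj nw ow)).
split => //; by rewrite intmxN eg scaleNr.
Qed.

End Circ.

Section Steep.
Variables (R : realFieldType) (d n : nat) (A : 'M[int]_(d, n)) (b : 'cV[int]_d) (c u : 'cV[int]_n).

Local Notation AR := (AR R A).
Local Notation iR := (intmx R).

Lemma circ_ker (g : 'cV[int]_n) : circuit R A g -> AR *m iR g = 0 /\ iR g != 0.
Proof.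
case=> z [[_ [Az _]] [ng [[lam eg] _]]]; split; last exact: intmx_nz.
by rewrite eg -scalemxAr Az scaler0.
Qed.

Lemma steep_aux k : forall (x z : 'cV[R]_n), (#|supp z| <= k)%N -> feasible A b u x ->
  z != 0 -> AR *m z = 0 -> applicable A b u x z ->
  exists g, [/\ circuit R A g, applicable A b u x (iR g) & descent c z <= descent c (iR g)].
Proof.
elim: k => [|k IH] x z hk fx nz Az ap.
  have [i hi] := nz_coord nz; move: hk; rewrite leqn0 cards_eq0 => /eqP h.
  by move: (in_set0 i); rewrite -h inE hi.
case: (classic (min_support_kernel A z)) => [msk|nmsk].
  have [g [lam [cg [l0 eg]]]] := circ_of_msk msk.
  exists g; split => //; last by rewrite eg descentZ.
  case: ap => eps [e0 fe]; exists (eps / lam); split; first by rewrite divr_gt0.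
  by rewrite eg scalerA divfK ?gt_eqF.
have [w Hw] : exists w, ~ (w != 0 -> AR *m w = 0 -> supp_sub w z -> supp_sub z w).
  apply: not_all_not_ex => H; apply: nmsk; split => //; split => // w.
  exact: NNPP (H w).
have [nw [Aw [swz nszw]]] : w != 0 /\ AR *m w = 0 /\ supp_sub w z /\ ~ supp_sub z w.
  have [h1 H1] := imply_to_and _ _ Hw; have [h2 H2] := imply_to_and _ _ H1.
  have [h3 H3] := imply_to_and _ _ H2; by [].
have [j [hzj hwj]] : exists j, z j 0 != 0 /\ w j 0 = 0.
  have [j Hj] := not_all_ex_not _ _ nszw; have [h1 h2] := imply_to_and _ _ Hj.
  by exists j; split => //; apply/eqP; apply: NNPP => /negP.
have [i1 hi1] := nz_coord nw.
have [w' [Aw' [sw' [hj' hpos]]]] : exists w', AR *m w' = 0 /\ supp_sub w' z /\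
    w' j 0 = 0 /\ exists i, 0 < w' i 0 * z i 0.
  case: (ltrP 0 (w i1 0 * z i1 0)) => h.
    by exists w; split => //; split => //; split => //; exists i1.
  exists (- w); split; first by rewrite mulmxN Aw oppr0.
  split; first by move=> i; rewrite mxE oppr_eq0; exact: swz.
  split; first by rewrite mxE hwj oppr0.
  exists i1; rewrite mxE mulNr oppr_gt0 lt_neqAle h andbT mulf_neq0 //.
  exact: swz.
have [t [t0 [cf1 [i0 [hzi0 hi0]]]]] := elim_step sw' hpos.
set z1 := z - t *: w'.
have Az1 : AR *m z1 = 0 by rewrite /z1 mulmxBr -scalemxAr Aw' Az scaler0 subrr.
have z1j : z1 j 0 = z j 0 by rewrite /z1 !mxE hj' mulr0 subr0.
have nz1 : z1 != 0 by apply/negP => /eqP h; move: hzj; rewrite -z1j h mxE eqxx.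
have cz1 : (#|supp z1| < #|supp z|)%N by apply: conf_proper cf1 _; exists i0.
have [a [bb [p [q [[a0 b0 ez cp cq] [np nq Ap Aq [sp sq]]]]]]] :
  exists a bb p q, [/\ 0 < a, 0 < bb, z = a *: p + bb *: q, conf p z & conf q z] /\
    [/\ p != 0, q != 0, AR *m p = 0, AR *m q = 0 &
        (#|supp p| < #|supp z|)%N /\ (#|supp q| < #|supp z|)%N].
  case: (classic (exists i, w' i 0 * z i 0 < 0)) => [[i2 h2]|hno].
    have sw'' : forall i, (- w') i 0 != 0 -> z i 0 != 0 by move=> i; rewrite mxE oppr_eq0; exact: sw'.
    have hp2 : exists i, 0 < (- w') i 0 * z i 0 by exists i2; rewrite mxE mulNr oppr_gt0.
    have [s [s0 [cf2 [i3 [hzi3 hi3]]]]] := elim_step sw'' hp2.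
    set z2 := z - s *: - w'.
    have Az2 : AR *m z2 = 0.
      by rewrite /z2 mulmxBr -scalemxAr mulmxN Aw' oppr0 Az scaler0 subrr.
    have z2j : z2 j 0 = z j 0 by rewrite /z2 !mxE hj' oppr0 mulr0 subr0.
    have nz2 : z2 != 0 by apply/negP => /eqP h; move: hzj; rewrite -z2j h mxE eqxx.
    have cz2 : (#|supp z2| < #|supp z|)%N by apply: conf_proper cf2 _; exists i3.
    have st0 : s + t != 0 by rewrite gt_eqF // addr_gt0.
    exists (s / (s + t)), (t / (s + t)), z1, z2; split; split => //.
    - by rewrite divr_gt0 // addr_gt0.
    - by rewrite divr_gt0 // addr_gt0.
    - apply/matrixP => i jj; rewrite /z1 /z2 !mxE; field => //.
  have cw : conf w' z.
    move=> i; split.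
      by rewrite leNgt; apply/negP => h; apply: hno; exists i.
    move=> hz; apply/eqP; apply: contraTT (eqxx (z i 0)) => /sw'; rewrite hz eqxx.
    by [].
  have nw' : w' != 0.
    case: hpos => i hi; apply/negP => /eqP h; move: hi; rewrite h mxE mul0r ltxx.
    by [].
  exists 1, t, z1, w'; split; split => //.
  - by rewrite scale1r /z1 subrK.
  - by split => //; apply: conf_proper cw _; exists j; split => //.
have [g1 [cg1 ag1 dg1]] := IH x p (ltnSE (leq_trans sp hk)) fx np Ap (conf_appl fx ap Ap cp).
have [g2 [cg2 ag2 dg2]] := IH x q (ltnSE (leq_trans sq hk)) fx nq Aq (conf_appl fx ap Aq cq).
case: (lerP (descent c (iR g2)) (descent c (iR g1))) => hg.
  exists g1; split => //; apply: (combine a0 b0 ez cp cq np nq dg1).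
  exact: le_trans dg2 hg.
exists g2; split => //; apply: (combine a0 b0 ez cp cq np nq _ dg2).
exact: le_trans dg1 (ltW hg).
Qed.

Lemma steep (x z : 'cV[R]_n) : feasible A b u x -> z != 0 -> AR *m z = 0 ->
  applicable A b u x z ->
  exists g, [/\ circuit R A g, applicable A b u x (iR g) & descent c z <= descent c (iR g)].
Proof. exact: (steep_aux (leqnn _)). Qed.

End Steep.

Lemma choice_opt (K T : Type) (P : K -> T -> Prop) :
  exists f : K -> option T, forall k,
    match f k with Some t => P k t | None => forall t, ~ P k t end.
Proof.
exists (fun k => match excluded_middle_informative (exists t, P k t) with
  | left H => Some (proj1_sig (constructive_indefinite_description _ H))
  | right _ => None end).
move=> k; case: excluded_middle_informative => [H|H] /=.
  exact: proj2_sig.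
by move=> t Pt; apply: H; exists t.
Qed.

Lemma max_seq (R : realFieldType) (T : eqType) (s : seq T) (P : T -> Prop) (F : T -> R) :
  (exists x, x \in s /\ P x) -> exists x, [/\ x \in s, P x & forall y, y \in s -> P y -> F y <= F x].
Proof.
elim: s => [|a s IH]; first by case=> x [].
case=> x [xs Px].
case: (classic (exists x, x \in s /\ P x)) => [H|H].
  have [y [ys Py Hy]] := IH H.
  case: (classic (P a)) => Pa.
    case: (lerP (F a) (F y)) => h.
      exists y; split; [by rewrite inE ys orbT|by []|].
      move=> z; rewrite inE => /orP[/eqP->|zs] Pz //; exact: Hy.
    exists a; split; [by rewrite inE eqxx|by []|].
    move=> z; rewrite inE => /orP[/eqP->|zs] Pz //.
    exact: le_trans (Hy _ zs Pz) (ltW h).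
  exists y; split; [by rewrite inE ys orbT|by []|].
  by move=> z; rewrite inE => /orP[/eqP->|zs] Pz //; exact: Hy.
have Pa : P a.
  move: xs; rewrite inE => /orP[/eqP<-|xs] //.
  by exfalso; apply: H; exists x.
exists a; split; [by rewrite inE eqxx|by []|].
move=> z; rewrite inE => /orP[/eqP->|zs] Pz //.
by exfalso; apply: H; exists z.
Qed.

Section Fin.
Variables (R : realFieldType) (d n : nat) (A : 'M[int]_(d, n)) (b : 'cV[int]_d) (c u : 'cV[int]_n).

Local Notation AR := (AR R A).
Local Notation iR := (intmx R).

Lemma circ_supp (g : 'cV[int]_n) (z : 'cV[R]_n) lam : lam != 0 -> iR g = lam *: z ->
  forall i, (g i 0 != 0) = (z i 0 != 0).
Proof.
move=> l0 eg i; move/matrixP: eg => /(_ i 0); rewrite !mxE => h.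
by rewrite -(intr_eq0 R) h mulf_eq0 (negPf l0).
Qed.

Lemma circ_eq (g g' : 'cV[int]_n) : circuit R A g -> circuit R A g' ->
  (forall i, (g i 0 != 0) = (g' i 0 != 0) /\ (0 < g i 0) = (0 < g' i 0)) -> g = g'.
Proof.
move=> cg cg' hs.
case: (cg) => z [msk [ng [[lam eg] gmin]]].
case: (cg') => z' [msk' [ng' [[lam' eg'] gmin']]].
have l0 : lam != 0 by apply/negP => /eqP l0; move: (intmx_nz R ng); rewrite eg l0 scale0r eqxx.
have l0' : lam' != 0 by apply/negP => /eqP l1; move: (intmx_nz R ng'); rewrite eg' l1 scale0r eqxx.
have sg := circ_supp l0 eg; have sg' := circ_supp l0' eg'.
have [_ [Az _]] := msk; have [_ [Az' _]] := msk'.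
have [mu emu] : exists mu, z' = mu *: z.
  apply: msk_prop msk Az' _ => i; rewrite -sg' -(proj1 (hs i)) sg //.
have [mu' emu'] : exists mu, z = mu *: z'.
  apply: msk_prop msk' Az _ => i; rewrite -sg (proj1 (hs i)) sg' //.
have n1 : norm1 (iR g) <= norm1 (iR g').
  by apply: gmin => //; exists (lam' * mu); rewrite eg' emu scalerA.
have n2 : norm1 (iR g') <= norm1 (iR g).
  by apply: gmin' => //; exists (lam * mu'); rewrite eg emu' scalerA.
set rho := lam' * mu / lam.
have erho : iR g' = rho *: iR g by rewrite eg' emu eg !scalerA /rho divfK.
have ng0 := norm1_gt0 (intmx_nz R ng).
have r1 : `|rho| = 1.
  have e : norm1 (iR g') = norm1 (iR g) by apply/eqP; rewrite eq_le n1 n2.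
  move: e; rewrite erho norm1Z => e.
  by apply: (mulIf (lt0r_neq0 ng0)); rewrite /= e mul1r.
have [i hi] := nz_coord (intmx_nz R ng).
have gi : g i 0 != 0 by move: hi; rewrite mxE intr_eq0.
case: (lerP 0 rho) => hr.
  have r_1 : rho = 1 by rewrite -r1 ger0_norm.
  by apply: (@intmx_inj R); rewrite erho r_1 scale1r.
have r_1 : rho = -1 by rewrite -r1 ltr0_norm // opprK.
exfalso; move: (proj2 (hs i)); move/matrixP: erho => /(_ i 0); rewrite !mxE r_1 mulN1r.
rewrite -intrN => /intr_inj ->; rewrite oppr_gt0.
by case: (ltrgtP (g i 0) 0) gi => // h _; rewrite ?h; move=> /esym/eqP; rewrite ?eqbF_neg ?negbK ?(ltW h) //=;
  try (by move/eqP; rewrite lt_gtF //); try (by rewrite eqb_id ltNge ltW).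
Qed.

Definition key (g : 'cV[int]_n) : {ffun 'I_n -> bool * bool} :=
  [ffun i => (g i 0 != 0, 0 < g i 0)].

Lemma circ_finite : exists s : seq 'cV[int]_n, uniq s /\ forall g, g \in s <-> circuit R A g.
Proof.
have [f hf] := choice_opt (fun k g => circuit R A g /\ key g = k).
have oc : ocancel f key by move=> k; have := hf k; case: (f k) => //= g [_ ->].
exists (pmap f (enum {ffun 'I_n -> bool * bool})); split.
  apply: (pmap_uniq oc); exact: enum_uniq.
move=> g; rewrite mem_pmap; split.
  case/mapP => k _ ek; by have := hf k; rewrite -ek => -[].
move=> cg; apply/mapP; exists (key g); first by rewrite mem_enum.
have := hf (key g); case: (f (key g)) => [g'|]; last by move=> H; exfalso; apply: (H g).
case=> cg' kg; congr Some; apply: circ_eq cg cg' _ => i.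
by move/ffunP: kg => /(_ i); rewrite !ffunE => -[-> ->].
Qed.

End Fin.

Lemma abs_opp (R : realFieldType) (a bb : R) : bb * (a + bb) <= 0 -> `|a + bb| = `|a| - `|bb|.
Proof.
move=> h.
case: (lerP 0 bb) => hb; case: (lerP 0 (a + bb)) => hab; case: (lerP 0 a) => ha;
  rewrite ?(ger0_norm hb) ?(ltr0_norm hb) ?(ger0_norm hab) ?(ltr0_norm hab)
          ?(ger0_norm ha) ?(ltr0_norm ha); nra.
Qed.

Section Main.
Variables (R : realFieldType) (d n : nat) (A : 'M[int]_(d, n)) (b : 'cV[int]_d) (c u : 'cV[int]_n).

Local Notation AR := (AR R A).
Local Notation iR := (intmx R).

Lemma norm10 : norm1 (0 : 'cV[R]_n) = 0.
Proof. by rewrite /norm1 big1 // => i _; rewrite mxE normr0. Qed.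

Lemma norm1_cancel (D g : 'cV[R]_n) e j : 0 < e ->
  g j 0 * (D j 0 + e * g j 0) <= 0 ->
  norm1 (D + e *: g) <= norm1 D + e * norm1 g - 2 * e * `|g j 0|.
Proof.
move=> e0 h.
rewrite /norm1 (bigD1 j) //= [\sum_i `|D i 0|](bigD1 j) //= [\sum_i `|g i 0|](bigD1 j) //=.
have hj : `|(D + e *: g) j 0| = `|D j 0| - e * `|g j 0|.
  rewrite !mxE abs_opp; first by rewrite normrM gtr0_norm.
  by rewrite -mulrA; apply: mulr_ge0_le0 => //; exact: ltW.
have hr : \sum_(i | i != j) `|(D + e *: g) i 0| <=
    \sum_(i | i != j) `|D i 0| + e * \sum_(i | i != j) `|g i 0|.
  rewrite mulr_sumr -big_split /=; apply: ler_sum => i _.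
  by rewrite !mxE (le_trans (ler_normD _ _)) // normrM gtr0_norm.
rewrite hj; lra.
Qed.

Lemma feasA (x : 'cV[R]_n) : feasible A b u x -> AR *m x = bR R b.
Proof. by case. Qed.

Lemma max_step (x g : 'cV[R]_n) : feasible A b u x -> AR *m g = 0 -> g != 0 ->
  exists alpha, [/\ 0 <= alpha, feasible A b u (x + alpha *: g),
    (forall beta, feasible A b u (x + beta *: g) -> beta <= alpha) &
    exists j, g j 0 != 0 /\ (if 0 < g j 0 then (x + alpha *: g) j 0 = uR R u j 0
                             else (x + alpha *: g) j 0 = 0)].
Proof.
move=> fx Ag nz.
pose bnd i := if 0 < g i 0 then (uR R u i 0 - x i 0) / g i 0 else x i 0 / (- g i 0).
have [j0 [hj0 Hmin]] := argmin_ex bnd (nz_coord nz).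
have bnd_ge0 : forall i, g i 0 != 0 -> 0 <= bnd i.
  move=> i hi; have := feas_box i fx; move=> /andP[h1 h2]; rewrite /bnd.
  case: ifP => hp; first by rewrite divr_ge0 // ?subr_ge0 // ltW.
  rewrite divr_ge0 // oppr_ge0 leNgt; exact: negbT.
set alpha := bnd j0.
have a0 : 0 <= alpha by exact: bnd_ge0.
have Hle1 : forall i beta, g i 0 != 0 -> 0 <= x i 0 + beta * g i 0 <= uR R u i 0 -> beta <= bnd i.
  move=> i beta hi; have := feas_box i fx; move=> /andP[h1 h2]; rewrite /bnd.
  case: ifP => hp.
    by rewrite ler_pdivlMr // => /andP[_ hh]; rewrite mulrC; lra.
  have hn : 0 < - g i 0 by rewrite oppr_gt0 lt_neqAle hi /= leNgt hp.
  by rewrite ler_pdivlMr // => /andP[hh _]; nra.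
have Hle2 : forall i beta, g i 0 != 0 -> 0 <= beta -> beta <= bnd i ->
    0 <= x i 0 + beta * g i 0 <= uR R u i 0.
  move=> i beta hi hb0; have := feas_box i fx; move=> /andP[h1 h2]; rewrite /bnd.
  case: ifP => hp.
    by rewrite ler_pdivlMr // => hh; apply/andP; split; nra.
  have hn : 0 < - g i 0 by rewrite oppr_gt0 lt_neqAle hi /= leNgt hp.
  by rewrite ler_pdivlMr // => hh; apply/andP; split; nra.
exists alpha; split => //.
- apply: feasD => //; first by rewrite -scalemxAr Ag scaler0.
  move=> i; rewrite [(alpha *: g) i 0]mxE.
  have [gi|gi] := eqVneq (g i 0) 0.
    by rewrite gi mulr0 addr0; exact: (feas_box i fx).
  by apply: Hle2 => //; apply: Hmin.
- move=> beta fb; have := feas_box j0 fb; rewrite [(x + _) j0 0]mxE [(beta *: g) j0 0]mxE.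
  exact: Hle1.
- exists j0; split => //; rewrite [(x + _) j0 0]mxE [(_ *: g) j0 0]mxE /alpha /bnd.
  by case: ifP => hp; rewrite hp; field.
Qed.

Lemma no_better (x D : 'cV[R]_n) delta : feasible A b u x ->
  (forall h, circuit R A h -> applicable A b u x (iR h) -> descent c (iR h) <= delta) ->
  AR *m D = 0 -> feasible A b u (x + D) -> delta * norm1 D < - cost c D -> False.
Proof.
move=> fx mx AD fD hlt.
have nD : D != 0.
  by apply/negP => /eqP D0; move: hlt; rewrite D0 norm10 mulr0 cost0 oppr0 ltxx.
have aD : applicable A b u x D by exists 1; rewrite scale1r; split => //; exact: ltr01.
have [h [ch ah dh]] := steep c fx nD AD aD.
have := mx h ch ah; move: hlt; rewrite -descent_lt // => h1 h2.
have := le_lt_trans h2 (lt_le_trans h1 dh); by rewrite ltxx.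
Qed.

End Main.

Definition sdata (R : realFieldType) (d n : nat) (A : 'M[int]_(d, n)) (b : 'cV[int]_d)
  (c u : 'cV[int]_n) (x x' : 'cV[R]_n) (g : 'cV[int]_n) (alpha : R) :=
    circuit R A g /\ applicable A b u x (intmx R g) /\
    (forall h, circuit R A h -> applicable A b u x (intmx R h) ->
       descent c (intmx R h) <= descent c (intmx R g)) /\
    0 < descent c (intmx R g) /\
    feasible A b u (x + alpha *: intmx R g) /\
    (forall beta : R, feasible A b u (x + beta *: intmx R g) -> beta <= alpha) /\
    x' = x + alpha *: intmx R g.

Unset Implicit Arguments.

Theorem theorem2 (R : realFieldType) (d n : nat)
  (A : 'M[int]_(d, n)) (b : 'cV[int]_d) (c u : 'cV[int]_n)
  (hu : forall i : 'I_n, 0 <= u i 0) :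
  (* (i) *)
  (forall (x z : 'cV[R]_n),
     feasible A b u x -> z != 0 -> AR R A *m z = 0 -> applicable A b u x z ->
     exists g : 'cV[int]_n,
       [/\ circuit R A g, applicable A b u x (intmx R g)
         & descent c z <= descent c (intmx R g)]) /\
  (* (ii) *)
  (exists s : seq 'cV[int]_n,
     [/\ uniq s, (forall g, g \in s <-> circuit R A g)
       & forall (x0 : 'cV[R]_n), feasible A b u x0 ->
         forall (xs : nat -> 'cV[R]_n) (K : nat), xs 0%N = x0 ->
           (forall k, (k < K)%N -> dsd_step A b c u (xs k) (xs k.+1)) ->
           [/\ (K <= size s)%N,
               (dsd_stopped A b c u (xs K) -> optimal A b c u (xs K))
             & (~ dsd_stopped A b c u (xs K) ->
                  exists y, dsd_step A b c u (xs K) y)]]).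
Proof.
split.
  by move=> x z fx nz Az ap; exact: steep.
have [s [us hs]] := circ_finite R A.
exists s; split => // x0 fx0 xs K e0 steps.
have feasK : forall k, (k <= K)%N -> feasible A b u (xs k).
  elim=> [|k IH] hk; first by rewrite e0.
  have [g [al [_ [_ [_ [_ [f1 [_ ->]]]]]]]] := steps k hk; exact: f1.
split.
-
  have H : forall k, exists p : 'cV[int]_n * R, (k < K)%N ->
      sdata A b c u (xs k) (xs k.+1) p.1 p.2.
    move=> k; case: (ltnP k K) => hk.
      have [g [al Hg]] := steps k hk; by exists (g, al).
    by exists (0, 0).
  pose F k := proj1_sig (constructive_indefinite_description _ (H k)).
  pose G k := (F k).1; pose Al k := (F k).2.
  have hF : forall k, (k < K)%N -> sdata A b c u (xs k) (xs k.+1) (G k) (Al k).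
    move=> k; exact: (proj2_sig (constructive_indefinite_description _ (H k))).
  pose del k := descent c (intmx R (G k)).
  have Al0 : forall k, (k < K)%N -> 0 < Al k.
    move=> k hk; have [_ [[eps [e0' fe]] [_ [_ [_ [mx _]]]]]] := hF k hk.
    exact: lt_le_trans e0' (mx _ fe).
  have mono1 : forall m, (m.+1 < K)%N -> del m.+1 <= del m.
    move=> m hm; have hm' : (m < K)%N by apply: ltnW.
    have [cg [ag [mxg [pg [fg [bg eg]]]]]] := hF m hm'.
    have [ch [[eps [e1 fe]] [_ [ph _]]]] := hF m.+1 hm.
    rewrite leNgt; apply/negP => hlt.
    have [Ag ng] := circ_ker cg; have [Ah nh] := circ_ker ch.
    pose D := Al m *: intmx R (G m) + eps *: intmx R (G m.+1).
    apply: (@no_better R d n A b c u (xs m) D (del m)).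
    + exact: feasK (ltnW hm').
    + exact: mxg.
    + by rewrite /D mulmxDr -!scalemxAr Ag Ah !scaler0 addr0.
    + by rewrite /D addrA -eg.
    + have hc : - cost c D = Al m * (del m * norm1 (intmx R (G m))) +
                  eps * (del m.+1 * norm1 (intmx R (G m.+1))).
        rewrite /D costD !costZ opprD -!mulrN !descentE //.
      have hn : norm1 D <= Al m * norm1 (intmx R (G m)) + eps * norm1 (intmx R (G m.+1)).
        apply: le_trans (norm1D _ _) _; rewrite !norm1Z (gtr0_norm e1) gtr0_norm //.
        exact: Al0.
      have pm : 0 < del m := pg.
      have eN : 0 < eps * norm1 (intmx R (G m.+1)) by rewrite mulr_gt0 // norm1_gt0.
      have h1 : del m * norm1 D <= del m * (Al m * norm1 (intmx R (G m)) + eps * norm1 (intmx R (G m.+1))).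
        by rewrite ler_pM2l.
      have h2 : 0 < eps * norm1 (intmx R (G m.+1)) * (del m.+1 - del m) by rewrite mulr_gt0 // subr_gt0.
      rewrite hc; nra.
  have mono : forall m l, (m <= l)%N -> (l < K)%N -> del l <= del m.
    move=> m; elim=> [|l IH] hml hl.
      by move: hml; rewrite leqn0 => /eqP->.
    move: hml; rewrite leq_eqVlt => /orP[/eqP->|hml] //.
    apply: le_trans (mono1 l hl) (IH _ (ltnW hl)); by rewrite -ltnS.
  have norep : forall k l, (k < l)%N -> (l < K)%N -> G k != G l.
    move=> k l hkl hlK; apply/negP => /eqP eG.
    have hkK : (k < K)%N by apply: ltn_trans hkl hlK.
    have hk1K : (k.+1 < K)%N by apply: leq_ltn_trans hkl hlK.
    have [cg [ag [mxg [pg [fg [bg eg]]]]]] := hF k hkK.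
    have [Ag ng] := circ_ker cg.
    have fxk := feasK k (ltnW hkK).
    have [al' [al0' fe' mx' [j [gj tj]]]] := max_step fxk Ag ng.
    have eal : Al k = al' by apply/eqP; rewrite eq_le (mx' _ fg) (bg _ fe').
    set g := intmx R (G k) in Ag ng fe' mx' gj tj fg bg eg mxg pg.
    set y := xs k.+1.
    have ty : if 0 < g j 0 then y j 0 = uR R u j 0 else y j 0 = 0.
      by rewrite /y eg eal.
    have fy : feasible A b u y := feasK _ (ltnW hk1K).
    have [_ [_ [mxy _]]] := hF k.+1 hk1K.
    have inv : forall i, (k.+1 + i <= l)%N -> exists T, [/\ 0 <= T,
        norm1 (xs (k.+1 + i)%N - y) <= T & del l * T <= cost c y - cost c (xs (k.+1 + i)%N)].
      elim=> [|i IH] hi.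
        exists 0; split => //; rewrite addn0 subrr ?norm10 //.
        by rewrite mulr0.
      have hm : (k.+1 + i < l)%N by apply: leq_trans hi; rewrite addnS.
      have hmK : (k.+1 + i < K)%N by apply: ltn_trans hm hlK.
      have [T [T0 hT1 hT2]] := IH (ltnW hm).
      have [cm [_ [_ [pm [_ [_ em]]]]]] := hF _ hmK.
      have [Am nm] := circ_ker cm.
      have Alm := Al0 _ hmK.
      have dm : del l <= del (k.+1 + i)%N by apply: mono => //; exact: ltnW.
      set m := (k.+1 + i)%N in hm hmK hT1 hT2 em Alm dm.
      have -> : (k.+1 + i.+1 = m.+1)%N by rewrite addnS.
      exists (T + Al m * norm1 (intmx R (G m))); split.
      + by rewrite addr_ge0 // mulr_ge0 ?norm1_ge0 // ltW.
      + rewrite em addrAC; apply: le_trans (norm1D _ _) _.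
        by rewrite norm1Z gtr0_norm // lerD2r.
      + rewrite em costD costZ.
        have := descentE c nm; rewrite -/(del m) => hd.
        have := norm1_ge0 (intmx R (G m)).
        set N := norm1 (intmx R (G m)) in hd *; move=> N0.
        have : del l * (Al m * N) <= del m * (Al m * N).
          by rewrite ler_pM2r // mulr_gt0 // norm1_gt0.
        nra.
    have [T [T0 hT1 hT2]] := inv (l - k.+1)%N (ltac:(by rewrite subnKC)).
    rewrite subnKC // in hT1 hT2.
    have [cl [[eps [e1 fe]] _]] := hF l hlK.
    rewrite -eG -/g in fe.
    pose D := (xs l - y) + eps *: g.
    apply: (@no_better R d n A b c u y D (del k.+1) fy mxy).
    + rewrite /D mulmxDr mulmxBr -scalemxAr Ag scaler0 addr0.
      by rewrite (feasA (feasK _ (ltnW hlK))) (feasA fy) subrr.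
    + by rewrite /D addrA [y + _]addrC subrK.
    + have hcan : g j 0 * ((xs l - y) j 0 + eps * g j 0) <= 0.
        have := feas_box j fe; rewrite !mxE.
        have gj' := gj; rewrite !mxE in gj'.
        move: ty; rewrite !mxE; case: ifP => hp ty; rewrite ty => /andP[h1 h2].
          nra.
        have : (G k j 0)%:~R < 0 :> R by rewrite lt_neqAle gj' /= leNgt hp.
        nra.
      have hn := norm1_cancel e1 hcan.
      have gj0 : 0 < `|g j 0| by rewrite normr_gt0.
      have hc : - cost c D = (cost c y - cost c (xs l)) + eps * (del l * norm1 g).
        rewrite /D costD costB costZ /del -eG -/g -(descentE c ng).
        ring.
      have dl : del k.+1 <= del l.
        apply: le_trans (mono k k.+1 (leqnSn _) hk1K) _.
        by rewrite /del eG.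
      have pl : 0 < del l by rewrite /del -eG.
      have pk : 0 < del k.+1 by have [_ [_ [_ [hp _]]]] := hF _ hk1K.
      have nD := norm1_ge0 D.
      have ng0 := norm1_ge0 g.
      have h0 : del k.+1 * norm1 D <= del l * norm1 D by apply: ler_wpM2r.
      have h3 : norm1 D <= T + eps * norm1 g - 2 * eps * `|g j 0| by lra.
      have h4 : del l * norm1 D <= del l * (T + eps * norm1 g - 2 * eps * `|g j 0|).
        by rewrite ler_pM2l.
      have h5 : 0 < del l * (eps * `|g j 0|) by apply: mulr_gt0 => //; apply: mulr_gt0.
      rewrite hc; nra.
  pose L := [seq G k | k <- iota 0 K].
  have -> : K = size L by rewrite size_map size_iota.
  apply: uniq_leq_size.
    rewrite map_inj_in_uniq ?iota_uniq // => k l; rewrite !mem_iota !add0n => hk hl eG.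
    case: (ltngtP k l) => // hkl.
      by move: (norep _ _ hkl hl); rewrite eG eqxx.
    by move: (norep _ _ hkl hk); rewrite eG eqxx.
  move=> g /mapP [k]; rewrite mem_iota add0n => hk ->.
  by apply/hs; have [] := hF k hk.
-
  move=> st; split; first exact: feasK.
  move=> y fy; rewrite leNgt; apply/negP => lt.
  apply: (@no_better R d n A b c u (xs K) (y - xs K) 0 (feasK _ (leqnn _)) st).
  + by rewrite mulmxBr (feasA fy) (feasA (feasK _ (leqnn _))) subrr.
  + by rewrite addrC subrK.
  + by rewrite mul0r costB opprB subr_gt0.
-
  move=> nst.
  have [h [ch [ah dh]]] : exists h, circuit R A h /\ applicable A b u (xs K) (intmx R h) /\
      0 < descent c (intmx R h).
    apply: NNPP => H; apply: nst => h ch ah; rewrite leNgt; apply/negP => dh.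
    by apply: H; exists h.
  have [g [gs ag mg]] := max_seq (fun g => descent c (intmx R g))
    (ex_intro (fun x => x \in s /\ applicable A b u (xs K) (intmx R x)) h (conj (proj2 (hs h) ch) ah)).
  have cg : circuit R A g by apply/hs.
  have [Ag ng] := circ_ker cg.
  have [al [al0 fe mx _]] := max_step (feasK _ (leqnn _)) Ag ng.
  exists (xs K + al *: intmx R g), g, al; split => //; split => //.
  split; first by move=> hh chh ahh; apply: mg => //; apply/hs.
  split; first by apply: lt_le_trans dh (mg _ (proj2 (hs h) ch) ah).
  by split.
Qed.
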